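(* Let $m\in\mathbb N$ and $k_1\ge k_2\ge\dots\ge k_m\ge1$ be integers. Then $$\sum_{j_2=0}^{k_2}\cdots\sum_{j_m=0}^{k_m}A_{j_2:j_m}=\operatorname{card}\Pi_{k_1,\dots,k_m},$$ where $A_{j_2:j_m}=\prod_{l=2}^m\binom{k_l}{j_l}\cdot\frac{k_1!\,(k_1+j_2)!\cdots(k_1+\sum_{i=2}^{m-1}j_i)!}{(k_1+j_2-k_2)!\,(k_1+j_2+j_3-k_3)!\cdots(k_1+\sum_{i=2}^mj_i-k_m)!}$ (for $m=1$ the left side is interpreted as $1$).
   Context: For $k=k_1+\dots+k_m$, let $[k]=\{1,\dots,k\}$ and $\pi=\{J_1,\dots,J_m\}$ with $J_i=\{j:k_1+\dots+k_{i-1}<j\le k_1+\dots+k_i\}$. $\Pi_{k_1,\dots,k_m}$ denotes the set of all partitions $\sigma$ of $[k]$ into disjoint nonempty blocks such that every block of $\sigma$ meets each $J_i$ in at most one element. *)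

(* Defs.v *)
From HB Require Import structures.
From mathcomp Require Import all_boot all_order all_algebra.
Set Implicit Arguments. Unset Strict Implicit. Unset Printing Implicit Defensive.
Import Order.TTheory GRing.Theory Num.Theory.

(* m = n.+1 groups of sizes k : 'I_n.+1 -> nat; k ord0 = k_1.
   The ground set [k] = {1,...,K} is modelled by 'I_K = {0,...,K-1},
   K = \sum_i k i. *)
Definition ktot (n : nat) (k : 'I_n.+1 -> nat) : nat := \sum_(i < n.+1) k i.

Definition Jblock (n : nat) (k : 'I_n.+1 -> nat) (i : 'I_n.+1)
  : {set 'I_(ktot k)} :=
  [set x : 'I_(ktot k) | (\sum_(i' < n.+1 | (i' < i)%N) k i' <= x)%N
                          && (x < \sum_(i' < n.+1 | (i' <= i)%N) k i')%N].

Definition Pi_set (n : nat) (k : 'I_n.+1 -> nat) : {set {set {set 'I_(ktot k)}}} :=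
  [set P : {set {set 'I_(ktot k)}} |
     partition P [set: 'I_(ktot k)]
     && [forall B in P, forall i : 'I_n.+1, (#|B :&: Jblock k i| <= 1)%N]].

(* A_{j_2:j_m}; index i : 'I_n corresponds to l = i + 2, i.e. k_l = k (lift ord0 i),
   j_l = j i. *)
Definition Aterm (n : nat) (k : 'I_n.+1 -> nat) (j : 'I_n -> nat) : rat :=
  \prod_(i < n)
    ((('C(k (lift ord0 i), j i))%:R : rat)
     * ((k ord0 + \sum_(i' < n | (i' < i)%N) j i')`!)%:R
     / ((k ord0 + \sum_(i' < n | (i' <= i)%N) j i' - k (lift ord0 i))`!)%:R).

(* Main.v *)
Require Import Defs.
From HB Require Import structures.
From mathcomp Require Import all_boot all_order all_algebra.
From mathcomp Require Import zify.
Import Order.TTheory GRing.Theory Num.Theory.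

Module MG1.
Set Implicit Arguments. Unset Strict Implicit. Unset Printing Implicit Defensive.

Section Gen.
Variables (T I : finType) (J : I -> {set T}).

Definition good (B : {set T}) := [forall i, #|B :&: J i| <= 1].
Definition Part (A : {set T}) : {set {set {set T}}} :=
  [set P | partition P A && [forall B in P, good B]].

Lemma goodS (B C : {set T}) : B \subset C -> good C -> good B.
Proof.
move=> sBC /forallP gC; apply/forallP=> i; apply: leq_trans (gC i).
by apply: subset_leq_card; apply: setSI.
Qed.

Lemma good1 y : good [set y].
Proof.
apply/forallP=> i; rewrite -(cards1 y); apply: subset_leq_card; apply: subsetIl.
Qed.

Lemma PartP P D :
  reflect (partition P D /\ {in P, forall B, good B}) (P \in Part D).
Proof.
rewrite inE; apply: (iffP andP) => [[h /forall_inP g]|[h g]]; split=> //.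
exact/forall_inP.
Qed.

Variable x : T.

Definition psi0 (Q : {set {set T}}) := [set x] |: Q.
Definition psi1 (Q : {set {set T}}) B := (x |: B) |: (Q :\ B).
Definition phi (P : {set {set T}}) :=
  if pblock P x == [set x] then P :\ pblock P x
  else (pblock P x :\ x) |: (P :\ pblock P x).

Variable A : {set T}.
Hypothesis xA : x \notin A.

Lemma psi0P Q : Q \in Part A -> psi0 Q \in Part (x |: A).
Proof.
case/PartP=> pQ gQ; apply/PartP; split.
  apply: partitionU1 => //; first by apply/set0Pn; exists x; rewrite set11.
  by rewrite disjoints1.
by move=> B /setU1P[->|/gQ //]; apply: good1.
Qed.

Lemma psi1P Q B : Q \in Part A -> B \in Q -> good (x |: B) ->
  psi1 Q B \in Part (x |: A).
Proof.
case/PartP=> pQ gQ BQ gB; apply/PartP; split.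
  have sBA := partitionS pQ BQ.
  have -> : x |: A = (x |: B) :|: (A :\: B).
    apply/setP=> y; rewrite !inE; case: (y == x) => //=.
    by case yB: (y \in B) => //=; rewrite (subsetP sBA _ yB).
  apply: partitionU1; first exact: partitionD1.
    by apply/set0Pn; exists x; rewrite setU11.
  rewrite -setI_eq0; apply/eqP/setP=> y; rewrite !inE.
  case: eqP => [->|_] /=; first by rewrite (negbTE xA) andbF.
  by case: (y \in B).
by move=> C /setU1P[->//|/setD1P[_ /gQ]].
Qed.

Lemma x_notin_Q Q C : Q \in Part A -> C \in Q -> x \notin C.
Proof.
case/PartP=> pQ _ CQ; apply: contra xA => xC.
by rewrite -(cover_partition pQ); apply/bigcupP; exists C.
Qed.

Lemma pblock_psi0 Q : Q \in Part A -> pblock (psi0 Q) x = [set x].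
Proof.
move=> /psi0P/PartP[pP _]; apply: def_pblock; first exact: partition_trivIset pP.
  by rewrite setU11.
by rewrite set11.
Qed.

Lemma pblock_psi1 Q B : Q \in Part A -> B \in Q -> good (x |: B) ->
  pblock (psi1 Q B) x = x |: B.
Proof.
move=> QP BQ gB; have /PartP[pP _] := psi1P QP BQ gB.
apply: def_pblock; first exact: partition_trivIset pP.
  by rewrite setU11.
by rewrite setU11.
Qed.

Lemma phi_psi0 Q : Q \in Part A -> phi (psi0 Q) = Q.
Proof.
move=> QP; rewrite /phi pblock_psi0 // eqxx /psi0 setU1K //.
by apply/negP=> /(x_notin_Q QP); rewrite set11.
Qed.

Lemma B_neq0 Q B : Q \in Part A -> B \in Q -> B != set0.
Proof. by move=> /PartP[pQ _]; apply: partition_neq0 pQ. Qed.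

Lemma xB_neq1 Q B : Q \in Part A -> B \in Q -> (x |: B == [set x]) = false.
Proof.
move=> QP BQ; apply/negP=> /eqP e.
have /set0Pn[b bB] := B_neq0 QP BQ.
have : b \in x |: B by rewrite setU1r.
rewrite e inE => /eqP eb; move: bB; rewrite eb => xB.
by move: (x_notin_Q QP BQ); rewrite xB.
Qed.

Lemma phi_psi1 Q B : Q \in Part A -> B \in Q -> good (x |: B) ->
  phi (psi1 Q B) = Q.
Proof.
move=> QP BQ gB; rewrite /phi pblock_psi1 // (xB_neq1 QP BQ).
rewrite setU1K ?(x_notin_Q QP BQ) // /psi1 setU1K ?setD1K //.
apply/negP=> /setD1P[_ /(x_notin_Q QP)]; by rewrite setU11.
Qed.

Lemma phiP P : P \in Part (x |: A) -> phi P \in Part A.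
Proof.
case/PartP=> pP gP.
have xc : x \in cover P by rewrite (cover_partition pP) setU11.
have CP := pblock_mem xc; have xC : x \in pblock P x by rewrite mem_pblock.
set C := pblock P x in CP xC *.
have pD := partitionD1 pP CP.
rewrite /phi -/C; case: eqP => [eC|neC].
  apply/PartP; split; last by move=> B /setD1P[_ /gP].
  by move: pD; rewrite eC setU1K.
apply/PartP; split; last first.
  move=> B /setU1P[->|/setD1P[_ /gP]] //.
  by apply: goodS (gP _ CP); apply: subsetDl.
have sCA := partitionS pP CP.
have -> : A = (C :\ x) :|: ((x |: A) :\: C).
  apply/setP=> y; rewrite !inE; case: eqP => [->|ny] /=.
    by rewrite xC (negbTE xA).
  case yC: (y \in C) => //=.
  by have := subsetP sCA _ yC; rewrite !inE; case: eqP.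
apply: partitionU1 => //.
  apply: contra_not_neq neC => e; apply/setP=> y; rewrite inE.
  case: (eqVneq y x) => [->|ny]; first by rewrite xC.
  apply/negP=> yC.
  have : y \in C :\ x by rewrite !inE ny yC.
  by rewrite e inE.
rewrite -setI_eq0; apply/eqP/setP=> y; rewrite !inE.
by case: (y \in C); rewrite ?andbF.
Qed.


Lemma setD1_neq0 (C : {set T}) : x \in C -> C != [set x] -> C :\ x != set0.
Proof.
move=> xC neC; apply: contra_neq neC => e; apply/setP=> y; rewrite inE.
case: (eqVneq y x) => [->|ny]; first by rewrite xC.
apply/negP=> yC.
have : y \in C :\ x by rewrite !inE ny yC.
by rewrite e inE.
Qed.

Lemma fiberE Q : Q \in Part A ->
  [set P in Part (x |: A) | phi P == Q] =
  psi0 Q |: [set psi1 Q B | B in [set B in Q | good (x |: B)]].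
Proof.
move=> QP; apply/setP=> P; apply/setIdP/idP.
- case=> PP /eqP eQ.
  have /PartP[pP gP] := PP.
  have xc : x \in cover P by rewrite (cover_partition pP) setU11.
  have CP := pblock_mem xc; have xC : x \in pblock P x by rewrite mem_pblock.
  move: eQ; rewrite /phi. set C := pblock P x in CP xC *.
  case: eqP => [eC|neC] eQ.
    by apply/setU1P; left; rewrite /psi0 -eQ -eC setD1K.
  apply/setU1P; right; apply/imsetP; exists (C :\ x).
    by rewrite !inE -eQ setU11 /= setD1K //; exact: gP.
  rewrite /psi1 setD1K // -eQ setU1K ?setD1K //.
  apply/negP=> /setD1P[nBC BP].
  have /trivIsetP tP := partition_trivIset pP.
  have dj := tP _ _ BP CP nBC.
  have /set0Pn[y yB] := setD1_neq0 xC (introN eqP neC).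
  have := disjointFr dj yB.
  by move: yB; rewrite !inE => /andP[_ ->].
- case/setU1P => [->|/imsetP[B]].
    by split; [exact: psi0P | rewrite phi_psi0].
  rewrite inE => /andP[BQ gB] ->.
  by split; [exact: psi1P | rewrite phi_psi1].
Qed.

Lemma step (F : nat -> nat) :
  \sum_(P in Part (x |: A)) F #|P| =
  \sum_(Q in Part A) (F #|Q|.+1 + #|[set B in Q | good (x |: B)]| * F #|Q|).
Proof.
rewrite (partition_big phi (fun Q => Q \in Part A)); last by move=> P; apply: phiP.
apply: eq_bigr => Q QP.
rewrite (eq_bigl (fun P => P \in [set P in Part (x |: A) | phi P == Q]));
  last by move=> P; rewrite inE.
rewrite fiberE // big_setU1 /=; last first.
  apply/imsetP=> -[B]; rewrite inE => /andP[BQ gB] e.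
  have := pblock_psi1 QP BQ gB; rewrite -e pblock_psi0 // => /eqP.
  by rewrite eq_sym (xB_neq1 QP BQ).
rewrite big_imset /=; last first.
  move=> B1 B2; rewrite !inE => /andP[B1Q g1] /andP[B2Q g2] e.
  have := pblock_psi1 QP B1Q g1; rewrite e pblock_psi1 // => e2.
  by rewrite -(setU1K (x_notin_Q QP B1Q)) -e2 setU1K // (x_notin_Q QP B2Q).
congr (_ + _).
  have nx : [set x] \notin Q by apply/negP=> /(x_notin_Q QP); rewrite set11.
  by rewrite /psi0 cardsU1 nx.
rewrite -sum_nat_const; apply: eq_bigr => B; rewrite inE => /andP[BQ gB].
have nx : x |: B \notin Q :\ B.
  by apply/negP=> /setD1P[_ /(x_notin_Q QP)]; rewrite setU11.
by rewrite /psi1 cardsU1 (cardsD1 B Q) BQ nx.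
Qed.

Variable i0 : I.
Hypothesis xJ : x \in J i0.
Hypothesis xJ' : forall i, x \in J i -> i = i0.

Lemma good_xB Q B : Q \in Part A -> B \in Q -> good (x |: B) = (B :&: J i0 == set0).
Proof.
move=> QP BQ; have /PartP[pQ gQ] := QP; have gB := gQ _ BQ.
have xB := x_notin_Q QP BQ.
apply/idP/idP.
- move=> /forallP/(_ i0) h; apply/eqP/setP=> y; rewrite !inE.
  apply/negP=> /andP[yB yJ].
  have : 1 < #|(x |: B) :&: J i0|.
    have sub : [set x; y] \subset (x |: B) :&: J i0.
      apply/subsetP=> z; rewrite !inE => /orP[]/eqP->;
        by rewrite ?eqxx ?xJ ?yB ?yJ ?orbT.
    apply: leq_trans (subset_leq_card sub); rewrite cards2.
    by case: eqP => // e; move: xB; rewrite e yB.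
  by rewrite ltnNge h.
- move=> /eqP e; apply/forallP=> i; rewrite setIUl.
  case: (eqVneq i i0) => [->|ni].
    rewrite e setU0; apply: leq_trans (subset_leq_card (subsetIl _ _)) _.
    by rewrite cards1.
  have -> : [set x] :&: J i = set0.
    apply/setP=> y; rewrite !inE; apply/negP=> /andP[/eqP-> /xJ' ei].
    by rewrite ei eqxx in ni.
  by rewrite set0U; move/forallP: gB.
Qed.

Lemma count_good Q : Q \in Part A ->
  #|[set B in Q | good (x |: B)]| = #|Q| - #|A :&: J i0|.
Proof.
move=> QP; have /PartP[pQ gQ] := QP.
have tQ := partition_trivIset pQ.
have cQ := cover_partition pQ.
have E : [set B in Q | good (x |: B)] = Q :\: [set B in Q | B :&: J i0 != set0].
  apply/setP=> B; rewrite !inE; case BQ: (B \in Q) => /=; last by rewrite ?andbF ?andbT.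
  by rewrite (good_xB QP BQ) negbK andbT.
have S : [set B in Q | B :&: J i0 != set0] = pblock Q @: (A :&: J i0).
  apply/setP=> B; rewrite inE; apply/andP/imsetP.
  - case=> BQ /set0Pn[y]; rewrite inE => /andP[yB yJ].
    exists y; first by rewrite inE yJ andbT -cQ; apply/bigcupP; exists B.
    by rewrite (def_pblock tQ BQ yB).
  - case=> y; rewrite inE => /andP[yA yJ] ->.
    have yc : y \in cover Q by rewrite cQ.
    split; first exact: pblock_mem.
    by apply/set0Pn; exists y; rewrite inE mem_pblock yc.
have inj : {in A :&: J i0 &, injective (pblock Q)}.
  move=> y z; rewrite !inE => /andP[yA yJ] /andP[zA zJ] e.
  have yc : y \in cover Q by rewrite cQ.
  have zc : z \in cover Q by rewrite cQ.
  have PQ := pblock_mem yc.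
  have /card_le1_eqP h := (forallP (gQ _ PQ)) i0.
  have yin : y \in pblock Q y :&: J i0 by rewrite inE mem_pblock yc yJ.
  have zin : z \in pblock Q y :&: J i0 by rewrite inE e mem_pblock zc zJ.
  by have := h _ _ yin zin.
have sSQ : [set B in Q | B :&: J i0 != set0] \subset Q.
  by apply/subsetP=> B; rewrite inE => /andP[].
rewrite E cardsD (setIidPr sSQ) S card_in_imset //.
Qed.

Lemma step_count (F : nat -> nat) :
  \sum_(P in Part (x |: A)) F #|P| =
  \sum_(Q in Part A) (F #|Q|.+1 + (#|Q| - #|A :&: J i0|) * F #|Q|).
Proof. by rewrite step; apply: eq_bigr => Q QP; rewrite count_good. Qed.

End Gen.

End MG1.
Import MG1.

Module MG2.
Set Implicit Arguments. Unset Strict Implicit. Unset Printing Implicit Defensive.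

Definition Psi (H : nat -> nat) (r a M : nat) :=
  \sum_(j < r.+1) 'C(r, j) * a ^_ (r - j) * H (M + j).

Lemma PsiS H r a M : Psi H r.+1 a M = Psi H r a M.+1 + a * Psi H r a.-1 M.
Proof.
rewrite /Psi big_ord_recl /=.
under eq_bigr => j _ do rewrite /bump /= binS !mulnDl subSS.
rewrite big_split /= [X in _ + X]addnC addnCA; congr (_ + _).
  by apply: eq_bigr => j _; rewrite add1n addSnnS.
rewrite big_distrr /=.
transitivity (\sum_(j < r.+2) 'C(r, j) * a ^_ (r.+1 - j) * H (M + j)).
  rewrite [in RHS]big_ord_recl /= !bin0; congr (_ + _).
rewrite big_ord_recr /= bin_small // !mul0n addn0.
apply: eq_bigr => j _; rewrite subSn ?ffactnS; last by rewrite -ltnS.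
by rewrite mulnCA !mulnA.
Qed.

End MG2.
Import MG2.

Module MG3.
Set Implicit Arguments. Unset Strict Implicit. Unset Printing Implicit Defensive.

Definition cons_ffun (B : finType) n (b : B) (g : {ffun 'I_n -> B}) : {ffun 'I_n.+1 -> B} :=
  [ffun i => if unlift ord0 i is Some i' then g i' else b].

Lemma cons_ffun0 (B : finType) n (b : B) (g : {ffun 'I_n -> B}) : cons_ffun b g ord0 = b.
Proof. by rewrite ffunE unlift_none. Qed.

Lemma cons_ffunS (B : finType) n (b : B) (g : {ffun 'I_n -> B}) i :
  cons_ffun b g (lift ord0 i) = g i.
Proof. by rewrite ffunE liftK. Qed.

Fixpoint Gf (N : nat) (ks : seq nat) : nat :=
  match ks with
  | [::] => 1
  | k :: ks' => \sum_(j < k.+1) 'C(k, j) * N ^_ (k - j) * Gf (N + j) ks'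
  end.

Lemma sum_recl n (P : pred nat) (j : 'I_n.+1 -> nat) :
  \sum_(i' < n.+1 | P i') j i' =
  (if P 0 then j ord0 else 0) + \sum_(i' < n | P i'.+1) j (lift ord0 i').
Proof. by rewrite big_mkcond big_ord_recl /= [in RHS]big_mkcond. Qed.

Local Open Scope ring_scope.

Definition AT n (N : nat) (b : 'I_n -> nat) (j : 'I_n -> nat) : rat :=
  \prod_(i < n)
    ((('C(b i, j i))%:R : rat)
     * ((N + \sum_(i' < n | (i' < i)%N) j i')`!)%:R
     / ((N + \sum_(i' < n | (i' <= i)%N) j i' - b i)`!)%:R).

Lemma AT_ext n N (b : 'I_n -> nat) (j1 j2 : 'I_n -> nat) :
  j1 =1 j2 -> AT N b j1 = AT N b j2.
Proof.
move=> e; rewrite /AT; apply: eq_bigr => i _.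
rewrite e (eq_bigr _ (fun i' _ => e i')) (eq_bigr _ (fun i' _ => e i')).
done.
Qed.

Lemma AT_S n N (b : 'I_n.+1 -> nat) (j : 'I_n.+1 -> nat) :
  (j ord0 <= b ord0 <= N)%N ->
  AT N b j = ('C(b ord0, j ord0) * N ^_ (b ord0 - j ord0))%:R *
     AT (N + j ord0) (fun i => b (lift ord0 i)) (fun i => j (lift ord0 i)).
Proof.
case/andP=> jb bN.
rewrite /AT big_ord_recl /=; congr (_ * _).
  rewrite !(sum_recl (fun i' => (i' < 0)%N)) !(sum_recl (fun i' => (i' <= 0)%N)) /=.
  rewrite !big_pred0 // !addn0 -subnBA //.
  have hm : (b ord0 - j ord0 <= N)%N := leq_trans (leq_subr _ _) bN.
  rewrite -(ffact_fact hm) natrM -mulrA mulfK ?natrM //.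
  by rewrite pnatr_eq0 -lt0n fact_gt0.
apply: eq_bigr => i _.
rewrite (sum_recl (fun i' => (i' < lift ord0 i)%N)).
rewrite (sum_recl (fun i' => (i' <= lift ord0 i)%N)) /= !addnA.
done.
Qed.
Lemma sum_ffunS (R : nmodType) (B : finType) n (F : {ffun 'I_n.+1 -> B} -> R) :
  \sum_(f : {ffun 'I_n.+1 -> B}) F f =
  \sum_(b : B) \sum_(g : {ffun 'I_n -> B}) F (cons_ffun b g).
Proof.
rewrite pair_big /=.
rewrite (reindex (fun p : B * {ffun 'I_n -> B} => cons_ffun p.1 p.2)) //.
exists (fun f : {ffun 'I_n.+1 -> B} => (f ord0, [ffun i : 'I_n => f (lift ord0 i)])) => [[b g] _|f _] /=.
  congr (_, _); first exact: cons_ffun0.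
  by apply/ffunP=> i; rewrite ffunE cons_ffunS.
apply/ffunP=> i; rewrite ffunE; case: unliftP => [j ->|->] //.
by rewrite ffunE.
Qed.

Lemma alg n : forall B N (b : 'I_n -> nat), (forall i, b i <= B)%N -> (forall i, b i <= N)%N ->
  \sum_(j : {ffun 'I_n -> 'I_B.+1} | [forall i, (j i <= b i)%N])
     AT N b (fun i => nat_of_ord (j i))
  = (Gf N [seq b i | i <- enum 'I_n])%:R.
Proof.
elim: n => [|n IH] B N b hB hN.
  rewrite enum_ord0 /=.
  rewrite (eq_bigl xpredT); last by move=> j; apply/forallP=> -[].
  rewrite (eq_bigr (fun _ => 1)); last by move=> j _; rewrite /AT big_ord0.
  by rewrite sumr_const card_ffun !card_ord expn0.
rewrite big_mkcond sum_ffunS /=.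
rewrite enum_ordSl /= -map_comp.
rewrite [RHS]natr_sum.
rewrite (@big_ord_widen _ _ _ (b ord0).+1 B.+1 (fun j => (('C(b ord0, j) * N ^_ (b ord0 - j) * Gf (N + j) [seq ([eta b] \o lift ord0) i | i <- enum 'I_n])%N)%:R)); last by rewrite ltnS.
rewrite [in RHS]big_mkcond /=; apply: eq_bigr => a _.
have E : forall g : {ffun 'I_n -> 'I_B.+1},
    [forall i, (cons_ffun a g i <= b i)%N] =
    (a <= b ord0)%N && [forall i, (g i <= b (lift ord0 i))%N].
  move=> g; apply/forallP/andP => [h|[h1 /forallP h2] i].
    split; first by have := h ord0; rewrite cons_ffun0.
    by apply/forallP=> i; have := h (lift ord0 i); rewrite cons_ffunS.
  by case: (unliftP ord0 i) => [j ->|->]; rewrite ?cons_ffunS ?cons_ffun0.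
rewrite ltnS; case: leqP => hab; last first.
  by apply: big1 => g _; rewrite E leqNgt hab.
under eq_bigr => g _ do rewrite E hab /=.
rewrite -big_mkcond /=.
under eq_bigr => g _ do rewrite AT_S ?cons_ffun0 ?hab ?hN //=.
rewrite -mulr_sumr [RHS]natrM; congr (_ * _).
have := IH B (N + a)%N (fun i => b (lift ord0 i)) (fun i => hB _)
  (fun i => leq_trans (hN _) (leq_addr _ _)).
move=> <-; apply: eq_bigr => g _; apply: AT_ext => i.
by rewrite cons_ffunS.
Qed.

End MG3.
Import MG3.

Module MG4.
Set Implicit Arguments. Unset Strict Implicit. Unset Printing Implicit Defensive.

Section Main.
Variables (n : nat) (k : 'I_n.+1 -> nat).
Local Notation K := (ktot k).

Definition kk (i : nat) : nat := if (i < n.+1)%N then k (inord i) else 0.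
Definition lo (l : nat) : nat := \sum_(0 <= i < l) kk i.

Lemma kkE (i : 'I_n.+1) : kk i = k i.
Proof. by rewrite /kk ltn_ord inord_val. Qed.

Lemma loS l : lo l.+1 = lo l + kk l.
Proof. by rewrite /lo big_nat_recr. Qed.

Lemma lo_mono l l' : l <= l' -> lo l <= lo l'.
Proof. by move=> h; rewrite /lo (big_cat_nat (leq0n l) h) leq_addr. Qed.

Lemma lo_top : lo n.+1 = K.
Proof. by rewrite /lo /ktot big_mkord; apply: eq_bigr => i _; apply: kkE. Qed.

Lemma sum_lt (i : 'I_n.+1) : \sum_(i' < n.+1 | i' < i) k i' = lo i.
Proof.
rewrite /lo (big_nat_widen _ _ _ _ _ (ltnW (ltn_ord i))) big_mkord.
by apply: eq_bigr => j _; rewrite kkE.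
Qed.

Lemma sum_le (i : 'I_n.+1) : \sum_(i' < n.+1 | i' <= i) k i' = lo i.+1.
Proof.
rewrite /lo (big_nat_widen _ _ _ _ _ (ltn_ord i)) big_mkord.
by apply: eq_bigr => j _; rewrite kkE.
Qed.

Lemma inJ (i : 'I_n.+1) (y : 'I_K) : (y \in Jblock k i) = (lo i <= y < lo i.+1).
Proof. by rewrite inE sum_lt sum_le. Qed.

Definition Pre t := [set y : 'I_K | y < t].

Lemma Pre_S t (ht : t < K) : Pre t.+1 = (Ordinal ht) |: Pre t.
Proof. by apply/setP=> y; rewrite !inE ltnS leq_eqVlt -val_eqE. Qed.

Lemma card_Pre t : t <= K -> #|Pre t| = t.
Proof.
elim: t => [|t IH] ht.
  by apply/eqP; rewrite cards_eq0; apply/eqP/setP=> y; rewrite !inE.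
by rewrite (Pre_S ht) cardsU1 IH ?(ltnW ht) // inE ltnn.
Qed.

Lemma Pre_top : Pre K = setT.
Proof. by apply/setP=> y; rewrite !inE ltn_ord. Qed.

Lemma x_group l t (ht : t < K) : l <= n -> lo l <= t < lo l.+1 ->
  Ordinal ht \in Jblock k (inord l) /\
  (forall i, Ordinal ht \in Jblock k i -> i = inord l).
Proof.
move=> hl ht'; split; first by rewrite inJ inordK.
move=> i; rewrite inJ /= => hi.
apply: val_inj; rewrite /= inordK //.
case: (ltngtP i l) => // h.
  have := lo_mono h; lia.
have := lo_mono h; lia.
Qed.

Lemma cardPJ l t : l <= n -> lo l <= t <= lo l.+1 ->
  #|Pre t :&: Jblock k (inord l)| = t - lo l.
Proof.
move=> hl ht.
have tK : t <= K.
  have h1 : lo l.+1 <= lo n.+1 by apply: lo_mono; rewrite ltnS.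
  rewrite -lo_top; lia.
have -> : Pre t :&: Jblock k (inord l) = Pre t :\: Pre (lo l).
  apply/setP=> y; rewrite in_setI inJ in_setD !inE inordK //; lia.
have sub : Pre (lo l) \subset Pre t.
  apply/subsetP=> y; rewrite !inE; lia.
rewrite cardsD (setIidPr sub) !card_Pre //; lia.
Qed.

Lemma Part0 F : \sum_(P in Part (Jblock k) set0) F #|P| = F 0.
Proof.
have -> : Part (Jblock k) set0 = [set set0].
  apply/setP=> P; rewrite !inE partition_set0.
  apply/andP/eqP => [[/eqP]|->] //; split => //.
  by apply/forall_inP => B; rewrite inE.
by rewrite big_set1 cards0.
Qed.

Definition ks_from l := [seq kk i | i <- iota l (n.+1 - l)].

Lemma ks_fromS l : l <= n -> ks_from l = kk l :: ks_from l.+1.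
Proof. by move=> hl; rewrite /ks_from subSn. Qed.

Lemma Psi0 H a M : Psi H 0 a M = H M.
Proof. by rewrite /Psi big_ord1 /= addn0 mul1n. Qed.

Lemma inner l (hl : l <= n) s : s <= kk l ->
  \sum_(P in Part (Jblock k) (Pre (lo l + s)))
     Psi (fun M => Gf M (ks_from l.+1)) (kk l - s) (#|P| - s) #|P|
  = \sum_(P in Part (Jblock k) (Pre (lo l)))
     Psi (fun M => Gf M (ks_from l.+1)) (kk l) #|P| #|P|.
Proof.
elim: s => [|s IH] hs.
  by rewrite addn0 subn0; apply: eq_bigr => P _; rewrite subn0.
have ht : lo l + s < K.
  have h1 : lo l.+1 <= lo n.+1 by apply: lo_mono; rewrite ltnS.
  rewrite -lo_top; move: h1; rewrite loS; lia.
rewrite addnS (Pre_S ht).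
have hb : lo l <= lo l + s < lo l.+1 by rewrite loS; lia.
have [xJ xJ'] := x_group ht hl hb.
have xA : Ordinal ht \notin Pre (lo l + s) by rewrite inE ltnn.
rewrite (step_count xA xJ xJ' (fun M => Psi (fun M => Gf M (ks_from l.+1)) (kk l - s.+1) (M - s.+1) M)).
rewrite -IH ?(ltnW hs) //; apply: eq_bigr => Q _.
rewrite cardPJ // ?addKn.
  by rewrite -(subnSK hs) PsiS subSS (subnS #|Q|).
rewrite loS; lia.
Qed.

Lemma outer l : l <= n.+1 ->
  \sum_(P in Part (Jblock k) (Pre (lo l))) Gf #|P| (ks_from l) = Gf 0 (ks_from 0).
Proof.
elim: l => [|l IH] hl.
  have -> : Pre (lo 0) = set0 by apply/setP=> y; rewrite !inE /lo big_geq.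
  exact: (Part0 (fun M => Gf M (ks_from 0))).
have hl' : l <= n by rewrite -ltnS.
apply: etrans _ (IH (ltnW hl)).
have := inner hl' (leqnn (kk l)); rewrite subnn -loS.
under eq_bigr => P _ do rewrite Psi0.
move=> ->; apply: eq_bigr => P _.
rewrite [in RHS](ks_fromS hl').
reflexivity.
Qed.
End Main.

End MG4.
Import MG4.

Local Open Scope ring_scope.

Theorem mainTheorem7 (n : nat) (k : 'I_n.+1 -> nat)
  (hmono : forall a b : 'I_n.+1, (a <= b)%N -> (k b <= k a)%N)
  (hpos : forall a : 'I_n.+1, (1 <= k a)%N) :
  \sum_(j : {ffun 'I_n -> 'I_(k ord0).+1}
          | [forall i : 'I_n, (j i <= k (lift ord0 i))%N])
     Aterm k (fun i => nat_of_ord (j i))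
  = (#|Pi_set k|)%:R.
Proof.
have hB : forall i, (k (lift ord0 i) <= k ord0)%N := fun i => hmono ord0 (lift ord0 i) (leq0n _).
transitivity ((Gf (k ord0) [seq k (lift ord0 i) | i <- enum 'I_n])%:R : rat).
  exact: (alg hB hB).
congr (_%:R).
have E := outer k (leqnn n.+1).
have e0 : ks_from k n.+1 = [::] by rewrite /ks_from subnn.
rewrite lo_top Pre_top e0 /= in E.
rewrite sum1_card in E.
have -> : Pi_set k = Part (Jblock k) setT by [].
rewrite E.
rewrite big_ord_recr /= big1; last first.
  by move=> j _; rewrite ffact0n subn_eq0 leqNgt ltn_ord muln0 mul0n.
rewrite add0n subnn binn ffactn0 !mul1n.
have -> : kk k 0 = k ord0 by rewrite -(kkE k ord0).
congr (Gf _ _).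
have -> : iota 1 n = map (addn 1) (iota 0 n) by rewrite -iotaDl.
by rewrite -val_enum_ord -!map_comp; apply: eq_map => i /=; rewrite -kkE.
Qed.
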